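(* Let $R$ be a commutative ring with identity, $\mathfrak{m}$ a maximal ideal of $R$, and $M$ a torsion-free unitary $R$-module. Then the following are equivalent: (1) $M$ is an $\mathfrak{m}$-Noetherian module; (2) $M_{\mathfrak{m}}$ is a Noetherian $R_{\mathfrak{m}}$-module and for every nonzero finitely generated $R$-submodule $L$ of $M$ there exists $s\in R\setminus\mathfrak{m}$ such that $L_{\mathfrak{m}}\cap M=L:s$.
   Context: For a prime ideal $P$, $M$ is $P$-Noetherian if it is $S$-Noetherian for $S=R\setminus P$, where a submodule $L$ is $S$-finite if there exist $s\in S$ and a finitely generated submodule $F$ of $M$ with $Ls\subseteq F\subseteq L$, and $M$ is $S$-Noetherian if every submodule is $S$-finite. For $r\in R$ and a submodule $L$ of $M$, $L:r=\{x\in M\mid xr\in L\}$. The intersection $L_{\mathfrak{m}}\cap M$ is taken in $M_{\mathfrak{m}}$, with $M$ identified with its image there. *)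

(* Defs.v *)
From mathcomp Require Import all_boot all_algebra.
Set Implicit Arguments. Unset Strict Implicit. Unset Printing Implicit Defensive.
Import GRing.Theory.
Local Open Scope ring_scope.

Section Defs.
Variable R : comNzRingType.

Definition is_ideal (I : R -> Prop) : Prop :=
  [/\ I 0, (forall x y, I x -> I y -> I (x + y)) & (forall r x, I x -> I (r * x))].

Definition maximal_ideal (m : R -> Prop) : Prop :=
  [/\ is_ideal m, ~ m 1 &
      forall J : R -> Prop, is_ideal J -> (forall x, m x -> J x) ->
        (forall x, J x -> m x) \/ (forall x, J x)].

Variable M : lmodType R.

Definition torsion_free : Prop := forall (r : R) (x : M), r *: x = 0 -> r = 0 \/ x = 0.

Definition submodule (L : M -> Prop) : Prop :=
  [/\ L 0, (forall x y, L x -> L y -> L (x + y)) & (forall r x, L x -> L (r *: x))].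

Definition generated_by (L : M -> Prop) (gs : seq M) : Prop :=
  forall x, L x <-> (forall L', submodule L' -> (forall g, g \in gs -> L' g) -> L' x).

Definition fin_gen (L : M -> Prop) : Prop := exists gs : seq M, generated_by L gs.

Definition S_finite (S : R -> Prop) (L : M -> Prop) : Prop :=
  exists s, S s /\ exists F : M -> Prop,
    submodule F /\ fin_gen F /\ (forall x, L x -> F (s *: x)) /\ (forall x, F x -> L x).

Definition S_Noetherian (S : R -> Prop) : Prop :=
  forall L, submodule L -> S_finite S L.

Definition P_Noetherian (P : R -> Prop) : Prop := S_Noetherian (fun s => ~ P s).

Definition colon (L : M -> Prop) (r : R) : M -> Prop := fun x => L (r *: x).

(* ---- Localization M_P at a prime P, as a setoid of fractions x/s (s \notin P) ---- *)
Definition loc_valid (P : R -> Prop) (p : M * R) : Prop := ~ P p.2.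

Definition loc_eq (P : R -> Prop) (p q : M * R) : Prop :=
  exists u, ~ P u /\ u *: (q.2 *: p.1 - p.2 *: q.1) = 0.

(* R_P-submodules of M_P: predicates on valid fractions, closed under equality
   of fractions, containing 0/1, closed under sums x/s + y/t = (t x + s y)/(s t)
   and under scalars (r/u)(x/s) = (r x)/(u s). *)
Definition loc_submodule (P : R -> Prop) (N : M * R -> Prop) : Prop :=
  [/\ (forall p, N p -> loc_valid P p),
      (forall p q, N p -> loc_valid P q -> loc_eq P p q -> N q),
      N (0, 1),
      (forall x s y t, N (x, s) -> N (y, t) -> N (t *: x + s *: y, s * t)) &
      (forall r u x s, ~ P u -> N (x, s) -> N (r *: x, u * s))].

Definition loc_fin_gen (P : R -> Prop) (N : M * R -> Prop) : Prop :=
  exists gs : seq (M * R), (forall g, g \in gs -> loc_valid P g) /\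
    forall p, N p <-> (forall N', loc_submodule P N' -> (forall g, g \in gs -> N' g) -> N' p).

Definition loc_Noetherian (P : R -> Prop) : Prop :=
  forall N, loc_submodule P N -> loc_fin_gen P N.

Definition loc_of (P : R -> Prop) (L : M -> Prop) : M * R -> Prop :=
  fun p => loc_valid P p /\ exists l t, L l /\ ~ P t /\ loc_eq P p (l, t).

(* L_P \cap M, with M identified with its image x |-> x/1 in M_P *)
Definition loc_cap (P : R -> Prop) (L : M -> Prop) : M -> Prop :=
  fun x => loc_of P L (x, 1).

End Defs.

(* Main.v *)
Require Import Defs.
From mathcomp Require Import all_boot all_algebra.
From mathcomp Require Import ring.
From Stdlib Require Import Classical.
Import GRing.Theory.
Local Open Scope ring_scope.
Set Implicit Arguments. Unset Strict Implicit.

Section Aux.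
Variable R : comNzRingType.
Variable m : R -> Prop.
Hypothesis hm : maximal_ideal m.
Variable M : lmodType R.
Hypothesis htf : torsion_free M.

Lemma m0 : m 0. Proof. by case: hm => [[]]. Qed.
Lemma m1 : ~ m 1. Proof. by case: hm. Qed.

Lemma m_prime s t : ~ m s -> ~ m t -> ~ m (s * t).
Proof.
move=> hs ht hst; case: hm => [[mz mD mM] _ mmax].
pose J := fun x => exists a y, m y /\ x = a * s + y.
have JI : is_ideal J.
  split.
  - by exists 0, 0; split => //; rewrite mul0r addr0.
  - move=> x y [a1 [y1 [h1 ->]]] [a2 [y2 [h2 ->]]].
    exists (a1 + a2), (y1 + y2); split; first by apply: mD.
    by rewrite mulrDl -!addrA; congr (_ + _); rewrite addrCA.
  - move=> r x [a [y [h ->]]]; exists (r * a), (r * y); split; first by apply: mM.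
    by rewrite mulrDr mulrA.
have mJ : forall x, m x -> J x by move=> x hx; exists 0, x; rewrite mul0r add0r.
case: (mmax J JI mJ) => [H|H].
  by apply: hs; apply: H; exists 1, 0; rewrite mul1r addr0.
case: (H 1) => a [y [hy e]]; apply: ht.
have -> : t = a * (s * t) + t * y by rewrite -[t in LHS]mulr1 e; ring.
by apply: mD; apply: mM.
Qed.

Lemma loc_eq_of (p q : M * R) : q.2 *: p.1 = p.2 *: q.1 -> loc_eq m p q.
Proof. by move=> e; exists 1; split; [exact: m1| rewrite e subrr scaler0]. Qed.

Lemma loc_eqE (p q : M * R) : loc_eq m p q -> q.2 *: p.1 = p.2 *: q.1.
Proof.
case=> u [hu e]; case: (htf e) => [u0|]; first by rewrite u0 in hu; case: hu; exact: m0.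
by move/eqP; rewrite subr_eq0 => /eqP.
Qed.

Lemma loc_capE (L : M -> Prop) x : submodule L ->
  loc_cap m L x <-> exists t, ~ m t /\ L (t *: x).
Proof.
move=> [L0 LD LZ]; split.
  move=> [_ [l [t [hl [ht /loc_eqE /= e]]]]]; exists t; split => //.
  by rewrite e scale1r.
move=> [t [ht hl]]; split; first exact: m1.
exists (t *: x), t; split => //; split => //; apply: loc_eq_of => /=.
by rewrite scale1r.
Qed.

Lemma loc_of_sub (L : M -> Prop) : submodule L -> loc_submodule m (loc_of m L).
Proof.
move=> [L0 LD LZ]; split.
- by move=> p [].
- move=> p q [hp [l [t [hl [ht /loc_eqE /= e1]]]]] hq /loc_eqE e2.
  split => //; exists (p.2 *: l), (p.2 * t); split; first by apply: LZ.
  split; first by apply: m_prime.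
  apply: loc_eq_of => /=.
  by rewrite mulrC -scalerA -e2 scalerA mulrC -scalerA e1.
- split; first exact: m1.
  exists 0, 1; split => //; split; first exact: m1.
  by apply: loc_eq_of.
- move=> x s y t [hs [l1 [t1 [hl1 [ht1 /loc_eqE /= e1]]]]]
                [ht [l2 [t2 [hl2 [ht2 /loc_eqE /= e2]]]]].
  split; first by apply: m_prime.
  exists (t2 *: l1 + t1 *: l2), (t1 * t2); split; first by apply: LD; apply: LZ.
  split; first by apply: m_prime.
  apply: loc_eq_of => /=.
  rewrite scalerDr !scalerA.
  have -> : t1 * t2 * t = t * t2 * t1 by ring.
  have -> : t1 * t2 * s = s * t1 * t2 by ring.
  rewrite -(scalerA (t * t2)) -(scalerA (s * t1)) e1 e2 !scalerA scalerDr !scalerA.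
  by congr (_ + _); congr (_ *: _); ring.
- move=> r u x s hu [hs [l1 [t1 [hl1 [ht1 /loc_eqE /= e1]]]]].
  split; first by apply: m_prime.
  exists (r *: l1), (u * t1); split; first by apply: LZ.
  split; first by apply: m_prime.
  apply: loc_eq_of => /=.
  rewrite !scalerA.
  have -> : u * t1 * r = u * r * t1 by ring.
  rewrite -scalerA e1 !scalerA; congr (_ *: _); ring.
Qed.


Definition genp (ls : seq M) : M -> Prop :=
  fun x => forall L', submodule L' -> (forall g, g \in ls -> L' g) -> L' x.

Lemma genp_sub ls : submodule (genp ls).
Proof.
split.
- by move=> L' [] .
- move=> x y hx hy L' hL' hg; case: (hL') => _ hD _; apply: hD; [exact: hx| exact: hy].
- move=> r x hx L' hL' hg; case: (hL') => _ _ hZ; apply: hZ; exact: hx.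
Qed.

Lemma genp_gen ls : generated_by (genp ls) ls.
Proof. by []. Qed.

Lemma genp_in ls g : g \in ls -> genp ls g.
Proof. by move=> hg L' _ H; apply: H. Qed.

Lemma fin_genP (F : M -> Prop) : fin_gen F -> exists gs : seq M,
  (forall g, g \in gs -> F g) /\
  (forall L', submodule L' -> (forall g, g \in gs -> L' g) -> forall x, F x -> L' x).
Proof.
case=> gs hg; exists gs; split.
  by move=> g hin; apply/hg => L' _ H; apply: H.
by move=> L' hL' H x /hg; apply.
Qed.

Lemma loc_sub_base (N : M * R -> Prop) : loc_submodule m N -> submodule (fun x => N (x, 1)).
Proof.
case=> hv hq h0 hD hZ; split => //.
- move=> x y hx hy; apply: (hq _ _ (hD _ _ _ _ hx hy)); first exact: m1.
  by apply: loc_eq_of => /=; rewrite !scale1r mulr1 scale1r.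
- move=> r x hx; apply: (hq _ _ (hZ r 1 _ _ m1 hx)); first exact: m1.
  by apply: loc_eq_of => /=; rewrite mulr1 !scale1r.
Qed.

Lemma dir1_cap : P_Noetherian M m -> forall L : M -> Prop, submodule L ->
  exists s, ~ m s /\ forall x, loc_cap m L x <-> colon L s x.
Proof.
move=> hN L hL; case: (hL) => L0 LD LZ.
pose K := fun x => exists t, ~ m t /\ L (t *: x).
have hK : submodule K.
  split.
  - by exists 1; split; [exact: m1| rewrite scaler0].
  - move=> x y [t1 [h1 l1]] [t2 [h2 l2]]; exists (t2 * t1); split; first exact: m_prime.
    rewrite scalerDr; apply: LD.
      by rewrite -scalerA; apply: LZ.
    by rewrite mulrC -scalerA; apply: LZ.
  - move=> r x [t [ht hl]]; exists t; split => //.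
    by rewrite scalerA mulrC -scalerA; apply: LZ.
case: (hN K hK) => s [hs [F [hF [hfg [KF FK]]]]].
case: (fin_genP hfg) => gs [gsF Fmin].
have : exists T, ~ m T /\ forall g, g \in gs -> L (T *: g).
  have : forall g, g \in gs -> K g by move=> g /gsF /FK.
  elim: gs {gsF Fmin} => [|g gs IH] hgs.
    by exists 1; split => //; exact: m1.
  case: IH => [g' hg'|T [hT HT]]; first by apply: hgs; rewrite inE hg' orbT.
  case: (hgs g (mem_head _ _)) => t [ht hl].
  exists (T * t); split; first exact: m_prime.
  move=> g'; rewrite inE => /orP [/eqP ->|hg'].
    by rewrite -scalerA; apply: LZ.
  by rewrite mulrC -scalerA; apply: LZ; apply: HT.
case=> T [hT HT].
have FT : forall y, F y -> L (T *: y).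
  apply: Fmin => //; split.
  - by rewrite scaler0.
  - by move=> x y hx hy; rewrite scalerDr; apply: LD.
  - by move=> r x hx; rewrite scalerA mulrC -scalerA; apply: LZ.
exists (T * s); split; first exact: m_prime.
move=> x; rewrite loc_capE //; split.
  by move/KF/FT; rewrite /colon scalerA.
by move=> h; exists (T * s); split => //; exact: m_prime.
Qed.

Lemma dir1_noeth : P_Noetherian M m -> loc_Noetherian M m.
Proof.
move=> hN N hNs; have hb := loc_sub_base hNs.
case: (hNs) => hv hq h0 hD hZ.
case: (hN _ hb) => s [hs [F [hF [hfg [KF FK]]]]].
case: (fin_genP hfg) => gs [gsF Fmin].
exists (map (fun g => (g, 1)) gs); split.
  by move=> g /mapP [x _ ->]; exact: m1.
move=> [x t]; split.
- move=> hp N' hN' hgs.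
  have ht : ~ m t := hv _ hp.
  have hx1 : N (x, 1).
    apply: (hq _ _ (hZ t 1 _ _ m1 hp)); first exact: m1.
    by apply: loc_eq_of => /=; rewrite mul1r !scale1r.
  have : N' (s *: x, 1).
    apply: (Fmin (fun y => N' (y, 1))); first exact: loc_sub_base.
      by move=> g hg; apply: hgs; apply/mapP; exists g.
    by apply: KF.
  case: (hN') => _ hq' _ _ hZ' h.
  apply: (hq' _ _ (hZ' 1 (s * t) _ _ (m_prime hs ht) h)) => //.
  by apply: loc_eq_of => /=; rewrite scale1r mulr1 scalerA mulrC.
- move=> H; apply: H => // g /mapP [y hy ->]; exact: FK (gsF _ hy).
Qed.

Lemma dir2 : loc_Noetherian M m ->
  (forall L : M -> Prop, submodule L -> fin_gen L -> (exists x, L x /\ x <> 0) ->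
      exists s : R, ~ m s /\ (forall x : M, loc_cap m L x <-> colon L s x)) ->
  P_Noetherian M m.
Proof.
move=> hLN hcap N hN.
case: (hLN _ (loc_of_sub hN)) => gs [gsv gsiff].
have gsN : forall g, g \in gs -> loc_of m N g.
  by move=> g hg; apply/gsiff => N' _ H; apply: H.
have : exists ls : seq M, (forall l, l \in ls -> N l) /\
   (forall g, g \in gs -> exists l t, l \in ls /\ ~ m t /\ loc_eq m g (l, t)).
  elim: gs {gsv gsiff} gsN => [|g gs IH] hgs.
    by exists [::]; split.
  case: IH => [g' hg'|ls [hls Hls]]; first by apply: hgs; rewrite inE hg' orbT.
  case: (hgs g (mem_head _ _)) => _ [l [t [hl [ht he]]]].
  exists (l :: ls); split.
    by move=> l'; rewrite inE => /orP [/eqP ->|]; [|apply: hls].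
  move=> g'; rewrite inE => /orP [/eqP ->|hg'].
    by exists l, t; rewrite mem_head.
  case: (Hls g' hg') => l' [t' [h1 [h2 h3]]]; exists l', t'; split => //.
  by rewrite inE h1 orbT.
case=> ls [lsN Hls].
pose L := genp ls.
have hL : submodule L := genp_sub ls.
have LN : forall x, L x -> N x by move=> x hx; apply: hx.
have capL : forall y, N y -> loc_cap m L y.
  move=> y hy.
  have : loc_of m N (y, 1).
    split; first exact: m1.
    exists y, 1; split => //; split; first exact: m1.
    exact: loc_eq_of.
  move/gsiff; apply; first exact: loc_of_sub.
  move=> g hg; case: (Hls g hg) => l [t [hl [ht he]]].
  split; first exact: gsv.
  by exists l, t; split => //; apply: genp_in.
have fL : fin_gen L by exists ls.
case: (classic (exists x, L x /\ x <> 0)) => [hne|hz].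
  case: (hcap L hL fL hne) => s [hs Hs].
  exists s; split => //; exists L; split => //; split => //; split => //.
  by move=> x /capL /Hs.
exists 1; split; first exact: m1.
exists L; split => //; split => //; split => //.
move=> x /capL; rewrite loc_capE // => -[t [ht hl]].
have e : t *: x = 0.
  apply: NNPP => hne; apply: hz; by exists (t *: x).
case: (htf e) => [t0|->]; first by rewrite t0 in ht; case: ht; exact: m0.
by rewrite scaler0; case: hL.
Qed.

End Aux.

Theorem proposition2p2 (R : comNzRingType) (m : R -> Prop) (M : lmodType R) :
  maximal_ideal m -> torsion_free M ->
  (P_Noetherian M m <->
   (loc_Noetherian M m /\
    forall L : M -> Prop, submodule L -> fin_gen L -> (exists x, L x /\ x <> 0) ->
      exists s : R, ~ m s /\ (forall x : M, loc_cap m L x <-> colon L s x))).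
Proof.
move=> hm htf; split.
  move=> hN; split; first exact: dir1_noeth.
  by move=> L hL _ _; apply: dir1_cap.
by case=> h1 h2; apply: dir2.
Qed.
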